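(* Let $C$ be a convex cone in a topological real vector space and $f:C\to\mathbb{R}$ a non-negative function that is positively homogeneous of degree $\alpha>0$. If $f$ is strictly sub-convex, then $f$ is continuous on $\mathrm{ri}(C)$. In particular, if $C=V$ is the whole space, $f$ strictly sub-convex implies $f$ continuous.
   Context: Topological real vector spaces are not assumed Hausdorff. A cone is a subset $C$ with $\lambda C\subseteq C$ for all $\lambda>0$. $f$ is positively homogeneous of degree $\alpha$ if $f(\lambda x)=\lambda^{\alpha}f(x)$ for all $x\in C$, $\lambda>0$. $S_r(f)=\{x\in C: f(x)\le r\}$. For a subset $S$, $\mathrm{Aff}(S)$ is its affine hull; $\mathrm{ri}(S)$, $\mathrm{rc}(S)$ are the interior and closure of $S$ in the subspace topology of $\mathrm{Aff}(S)$. $]x,y[=\{(1-t)x+ty: t\in[0,1]\}\setminus\{x,y\}$. A set $C$ is strictly convex if for any two distinct $x,y\in\mathrm{rc}(C)$, $]x,y[\subseteq\mathrm{ri}(C)$. $f$ is strictly sub-convex if $S_r(f)$ is strictly convex for every $r\in\mathbb{R}$. *)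

(* Defs.v *)
From HB Require Import structures.
From mathcomp Require Import all_boot all_order all_algebra.
From mathcomp Require Import all_classical all_reals all_analysis.
Set Implicit Arguments. Unset Strict Implicit. Unset Printing Implicit Defensive.
Import Order.TTheory GRing.Theory Num.Theory.
Local Open Scope classical_set_scope.
Local Open Scope ring_scope.

Section Defs.
Context {R : realType} {V : topologicalLmodType R}.

Definition convex_set_in (S : set V) : Prop :=
  forall x y (t : R), S x -> S y -> 0 <= t <= 1 -> S ((1 - t) *: x + t *: y).

Definition is_cone (C : set V) : Prop :=
  forall (l : R) x, 0 < l -> C x -> C (l *: x).

Definition affine_set (A : set V) : Prop :=
  forall x y (t : R), A x -> A y -> A ((1 - t) *: x + t *: y).

Definition aff (S : set V) : set V :=
  \bigcap_(A in [set A : set V | affine_set A /\ S `<=` A]) A.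

(* relative interior: interior of S in the subspace topology of aff S *)
Definition ri (S : set V) : set V :=
  [set x | S x /\ exists U : set V, [/\ open U, U x & U `&` aff S `<=` S]].

(* relative closure: closure of S in the subspace topology of aff S *)
Definition rc (S : set V) : set V :=
  [set x | aff S x /\
     forall U : set V, open U -> U x -> (U `&` aff S) `&` S !=set0].

Definition open_seg (x y : V) : set V :=
  [set z | exists2 t : R, 0 <= t <= 1 & z = (1 - t) *: x + t *: y]
  `\` [set x; y].

Definition strictly_convex (S : set V) : Prop :=
  forall x y, rc S x -> rc S y -> x <> y -> open_seg x y `<=` ri S.

Definition sublevel (C : set V) (f : V -> R) (r : R) : set V :=
  [set x | C x /\ f x <= r].

Definition strictly_subconvex (C : set V) (f : V -> R) : Prop :=
  forall r : R, strictly_convex (sublevel C f r).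

Definition pos_homogeneous (C : set V) (f : V -> R) (alpha : R) : Prop :=
  forall (l : R) x, 0 < l -> C x -> f (l *: x) = l `^ alpha * f x.

End Defs.

(* Main.v *)
Require Import Defs.
From HB Require Import structures.
From mathcomp Require Import all_boot all_order all_algebra.
From mathcomp Require Import all_classical all_reals all_analysis.
From mathcomp Require Import ring lra.
Import Order.TTheory GRing.Theory Num.Theory.
Import numFieldNormedType.Exports.
Local Open Scope classical_set_scope.
Local Open Scope ring_scope.
Section S.
Context {R : realType} {V : topologicalLmodType R}.
Lemma scaler_cont (l : R) : continuous (fun x : V => l *: x).
Proof.
move=> x.
apply: (@continuous_comp V (R^o * V)%type V (fun x => (l, x)) (fun z => z.1 *: z.2)); last exact: scale_continuous.
exact: (@cvg_pair _ _ _ _ _ _ _ _ _ (fun=> l) id (cvg_cst _) cvg_id).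
Qed.
Lemma scalel_cont (y : V) : continuous (fun t : R => t *: y).
Proof.
move=> t.
apply: (@continuous_comp R (R^o * V)%type V (fun t => (t, y)) (fun z => z.1 *: z.2)); last exact: scale_continuous.
exact: (@cvg_pair _ _ _ _ _ _ _ _ _ id (fun=> y) cvg_id (cvg_cst _)).
Qed.
Lemma neg_small (y : V) (U : set V) : open U -> U 0 -> exists s : R, 0 < s /\ U (- s *: y).
Proof.
move=> oU U0.
have : nbhs (0:R) ((fun t : R => t *: y) @^-1` U).
  apply: (scalel_cont y 0). rewrite scale0r. exact: open_nbhs_nbhs.
move=> /nbhs_ballP[e /= e0 He].
exists (e/2); split; first by rewrite divr_gt0.
apply: He. rewrite /ball /= sub0r opprK ger0_norm ?divr_ge0 ?ltW //.
by rewrite ltr_pdivrMr // ltr_pMr // ltr1n.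
Qed.

Lemma sub_aff (S : set V) : S `<=` aff S.
Proof. by move=> x Sx A [_ SA]; exact: SA. Qed.

Lemma aff_comb (S : set V) x y (t : R) : aff S x -> aff S y -> aff S ((1 - t) *: x + t *: y).
Proof. move=> hx hy A /= [affA SA]; apply: (affA); [apply: hx|apply: hy]; by split. Qed.

Lemma sub_rc (S : set V) : S `<=` rc S.
Proof. move=> x Sx; split; first exact: sub_aff. move=> U oU Ux; exists x; split; [split; [exact: Ux|exact: sub_aff]|exact: Sx]. Qed.

Lemma scal_neq (c d : R) (x : V) : x <> 0 -> c <> d -> c *: x <> d *: x.
Proof.
move=> x0 cd E; apply: x0.
have cd0 : c - d != 0 by rewrite subr_eq0; apply/eqP.
apply: (scalerI cd0); rewrite scaler0 scalerBl E subrr //.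
Qed.

Lemma mid_ri (S : set V) (x : V) (l : R) : strictly_convex S -> x <> 0 -> 1 < l ->
  rc S ((2^-1) *: x) -> rc S (l *: x) -> ri S x.
Proof.
move=> sc x0 l1 hp hq.
have l0 : 0 < l by apply: lt_trans l1.
have d0 : 0 < 2 * l - 1 by rewrite subr_gt0 (lt_trans l1) // ltr_pMl // ltr1n.
apply: (sc _ _ hp hq).
  apply: scal_neq => // E; move: l1; rewrite -E; rewrite ltNge => /negP; apply.
  by rewrite invf_le1 // ler1n.
split.
  exists ((2 * l - 1)^-1).
    rewrite invr_ge0 ltW //= invf_le1 //; lra.
  rewrite !scalerA -scalerDl -[LHS]scale1r; congr (_ *: _).
  field; exact: lt0r_neq0.
move=> /= [] E.
  apply: x0. have h : (1 - 2^-1 : R) != 0 by rewrite subr_eq0 eq_sym invr_eq1 // pnatr_eq1.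
  apply: (scalerI h); rewrite scaler0 scalerBl scale1r -E subrr //.
apply: (@scal_neq 1 l x x0); first by move=> h; move: l1; rewrite -h ltxx.
by rewrite scale1r.
Qed.

Definition rt (a b : R) := b `^ a^-1.

Lemma rtK (a b : R) : 0 < a -> 0 <= b -> (rt a b) `^ a = b.
Proof. by move=> a0 b0; rewrite /rt -powRrM mulVf ?gt_eqF // powRr1. Qed.

Lemma rt_gt0 (a b : R) : 0 < b -> 0 < rt a b.
Proof. exact: powR_gt0. Qed.

Lemma powR_le1 (a l : R) : 0 < a -> 0 <= l -> l <= 1 -> l `^ a <= 1.
Proof.
move=> a0 l0 l1.
have := ge0_ler_powR (ltW a0) _ _ l1; rewrite powR1; apply => //; rewrite nnegrE //.
Qed.

Lemma rt_gt1 (a b : R) : 0 < a -> 1 < b -> 1 < rt a b.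
Proof.
move=> a0 b1; have b0 : 0 < b by apply: lt_trans b1.
rewrite ltNge; apply/negP => h.
have := @powR_le1 a (rt a b) a0 (ltW (@rt_gt0 a b b0)) h.
rewrite rtK //; last exact: ltW.
by move=> h2; move: (lt_le_trans b1 h2); rewrite ltxx.
Qed.

Section Main.
Variables (C : set V) (f : V -> R) (a : R).
Hypotheses (cone : is_cone C) (fge0 : forall x, C x -> 0 <= f x) (a0 : 0 < a)
  (hom : pos_homogeneous C f a) (sc : strictly_subconvex C f).

Lemma f_zero : C 0 -> f 0 = 0.
Proof.
move=> C0.
have h2 : 1 < 2 `^ a.
  have := @gt0_ltr_powR R a a0 1 2; rewrite powR1; apply; rewrite ?nnegrE //.
  by rewrite ltr1n.
have := hom 2 0 (ltr0Sn _ 1) C0; rewrite scaler0 => E.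
have := fge0 _ C0; nra.
Qed.

Lemma small_scale (r M : R) z : 0 < r -> 0 <= M -> C z -> f z <= M ->
  C (rt a (r / (M + r)) *: z) /\ f (rt a (r / (M + r)) *: z) <= r.
Proof.
move=> r0 M0 Cz fz.
have Mr : 0 < M + r by lra.
have q0 : 0 < r / (M + r) by rewrite divr_gt0.
have l0 := @rt_gt0 a _ q0.
split; first exact: cone.
rewrite (hom _ _ l0 Cz) rtK //; last exact: ltW.
have fz0 := fge0 _ Cz.
rewrite mulrAC ler_pdivrMr // ler_pM2l //; lra.
Qed.

Lemma C_aff r : 0 < r -> C `<=` aff (sublevel C f r).
Proof.
move=> r0 y Cy.
have fy0 := fge0 _ Cy.
have [Cp fp] := @small_scale r (f y) y r0 fy0 Cy (lexx _).
have : 0 < rt a (r / (f y + r)) by apply: rt_gt0; rewrite divr_gt0 //; lra.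
move: Cp fp; set l := rt a _; clearbody l => Cp fp l0.
have Cq : C ((l / 2) *: y) by apply: cone; rewrite ?divr_gt0.
have fq : f ((l / 2) *: y) <= r.
  rewrite hom ?divr_gt0 //; apply: le_trans fp; rewrite hom //.
  apply: ler_wpM2r => //; apply: ge0_ler_powR; rewrite ?nnegrE. all: try lra. exact: (ltW a0).
have -> : y = (1 - 2 * (l - 1) / l) *: (l *: y) + (2 * (l - 1) / l) *: ((l / 2) *: y).
  rewrite !scalerA -scalerDl -[LHS]scale1r; congr (_ *: _).
  field; exact: lt0r_neq0.
by apply: aff_comb; apply: sub_aff.
Qed.


Lemma ri_to_U r x : 0 < r -> ri (sublevel C f r) x ->
  exists U, open U /\ U x /\ forall y, U y -> C y -> f y <= r.
Proof.
move=> r0 [_ [U [oU Ux HU]]]; exists U; split => //; split => // y Uy Cy.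
by have [] := HU y (conj Uy (C_aff _ r0 _ Cy)).
Qed.

Lemma half_le (r : R) z : C z -> f z <= r -> C (2^-1 *: z) /\ f (2^-1 *: z) <= r.
Proof.
move=> Cz fz; have h2 : (0 : R) < 2^-1 by rewrite invr_gt0.
split; first exact: cone.
rewrite (hom _ _ h2 Cz); apply: le_trans fz.
rewrite -[leRHS]mul1r ler_wpM2r //; first exact: fge0 _ Cz.
by apply: powR_le1 => //; rewrite ?invr_ge0 ?invf_le1 ?ler1n.
Qed.

Lemma US x r : ri C x -> 0 < r -> f x < r ->
  exists U, open U /\ U x /\ forall y, U y -> C y -> f y <= r.
Proof.
move=> rix r0 fxr; have Cx := rix.1.
have fx0 := fge0 _ Cx.
case: (pselect (x = 0)) => [x0|xn0]; last first.
  apply: (ri_to_U _ _ r0).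
  set m := Num.max (f x) (r / 2).
  have fxm : f x <= m by rewrite le_max lexx.
  have rm : r / 2 <= m by rewrite le_max lexx orbT.
  have mr : m < r by rewrite gt_max fxr /=; lra.
  have m0 : 0 < m by lra.
  have b1 : 1 < r / m by rewrite ltr_pdivlMr // mul1r.
  have l1 := rt_gt1 _ _ a0 b1.
  have l0 : 0 < rt a (r / m) by lra.
  apply: (mid_ri _ _ _ (sc r) xn0 l1); apply: sub_rc.
    exact: (half_le _ _ Cx (ltW fxr)).
  split; first exact: cone.
  rewrite (hom _ _ l0 Cx) rtK //; last by rewrite divr_ge0 // ltW.
  by rewrite mulrAC ler_pdivrMr // ler_pM2l.
subst x.
case: (pselect (exists y, C y /\ y <> 0)) => [[y [Cy yn0]]|none]; last first.
  exists setT; split; first exact: openT.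
  split => // y _ Cy.
  have -> : y = 0 by apply: contrapT => h; apply: none; exists y.
  rewrite f_zero //; exact: ltW.
case: rix => C0 [U [oU U0 HU]].
have [s [s0 Us]] := neg_small y U oU U0.
have affz : aff C ((- s) *: y).
  have := aff_comb _ _ _ (- s) (sub_aff _ _ C0) (sub_aff _ _ Cy); rewrite scaler0 add0r //.
have Cz := HU _ (conj Us affz).
have fz0 := fge0 _ Cz; have fy0 := fge0 _ Cy.
have M0 : 0 <= f ((- s) *: y) + f y by lra.
have [Cp fp] := @small_scale r _ _ r0 M0 Cz (ler_wpDr fy0 (lexx _)).
have [Cq fq] := @small_scale r _ _ r0 M0 Cy (ler_wpDl fz0 (lexx _)).
have : 0 < rt a (r / (f ((- s) *: y) + f y + r)) by apply: rt_gt0; rewrite divr_gt0 //; lra.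
move: Cp fp Cq fq; set l := rt a _; clearbody l => Cp fp Cq fq l0.
apply: (ri_to_U _ _ r0).
apply: (sc r (l *: ((- s) *: y)) (l *: y) (sub_rc _ _ (conj Cp fp)) (sub_rc _ _ (conj Cq fq))).
  rewrite scalerA; apply: scal_neq => // h; nra.
split.
  exists (s / (1 + s)).
    apply/andP; split; first by rewrite divr_ge0 //; lra.
    rewrite ler_pdivrMr; lra.
  rewrite !scalerA -scalerDl [X in X *: y](_ : _ = 0) ?scale0r //.
  field; lra.
move=> /= [] E.
  have := @scal_neq (l * - s) 0 y yn0; rewrite scale0r -scalerA -E; apply => //; nra.
have := @scal_neq l 0 y yn0; rewrite scale0r -E; apply => //; lra.
Qed.


Lemma LS x r : C x -> 0 < r -> r < f x ->
  exists U, open U /\ U x /\ forall y, U y -> C y -> r < f y.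
Proof.
move=> Cx r0 rfx.
apply: contrapT => H.
have H' : forall U, open U -> U x -> exists y, U y /\ C y /\ f y <= r.
  move=> U oU Ux; apply: contrapT => K; apply: H; exists U; split => //; split => // y Uy Cy.
  rewrite ltNge; apply/negP => fy; apply: K; by exists y.
have [r' [rr' r'fx]] : exists r', r < r' /\ r' < f x by exists ((r + f x) / 2); split; lra.
have r'0 : 0 < r' by lra.
have rcnu : forall nu, 0 < nu -> nu `^ a * r <= r' -> rc (sublevel C f r') (nu *: x).
  move=> nu nu0 hnu; split; first exact: (C_aff _ r'0 _ (cone _ _ nu0 Cx)).
  move=> U oU Uv.
  have oW : open ((fun z => nu *: z) @^-1` U).
    apply: open_comp => // z _; exact: scaler_cont.
  have [y [Wy [Cy fy]]] := H' _ oW Uv.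
  have Cny := cone _ _ nu0 Cy.
  have fny : f (nu *: y) <= r'.
    rewrite (hom _ _ nu0 Cy); apply: le_trans hnu; apply: ler_wpM2l => //; exact: powR_ge0.
  exists (nu *: y); split; [split; [exact: Wy | exact: (sub_aff _ _ (conj Cny fny))] | by split].
have x0 : x <> 0.
  by move=> x0; subst x; rewrite f_zero // in rfx; lra.
have b1 : 1 < r' / r by rewrite ltr_pdivlMr // mul1r.
have l1 := rt_gt1 _ _ a0 b1.
have l0 : 0 < rt a (r' / r) by lra.
have h2 : (0 : R) < 2^-1 by rewrite invr_gt0.
have := mid_ri _ _ _ (sc r') x0 l1 _ _.
case.
- apply: rcnu => //; apply: le_trans (ltW rr'); rewrite -[leRHS]mul1r.
  apply: ler_wpM2r; first lra.
  by apply: powR_le1 => //; rewrite ?invr_ge0 ?invf_le1 ?ler1n.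
- apply: rcnu => //; rewrite rtK ?divfK //; first by apply: lt0r_neq0.
  by rewrite divr_ge0 // ltW.
- by move=> [_ fx] _; lra.
Qed.

Lemma core x e : ri C x -> 0 < e ->
  exists U, open U /\ U x /\ forall y, U y -> C y -> `|f x - f y| < e.
Proof.
move=> rix e0; have Cx := rix.1; have fx0 := fge0 _ Cx.
have [U1 [oU1 [U1x H1]]] := US x (f x + e/2) rix ltac:(lra) ltac:(lra).
have [U2 [oU2 [U2x H2]]] : exists U2, open U2 /\ U2 x /\ forall y, U2 y -> C y -> f x - e < f y.
  case: (ltP 0 (f x - e/2)) => h.
    have [U [oU [Ux HU]]] := LS x (f x - e/2) Cx h ltac:(lra).
    exists U; split=>//; split=>// y Uy Cy; have := HU y Uy Cy; lra.
  exists setT; split; first exact: openT.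
  split=> // y _ Cy; have := fge0 _ Cy; lra.
exists (U1 `&` U2); split; first exact: openI.
split; first by split.
move=> y [U1y U2y] Cy; rewrite ltr_distlC; have := H1 y U1y Cy; have := H2 y U2y Cy.
move=> h1 h2; apply/andP; split; lra.
Qed.

End Main.
End S.

Theorem mainTheorem5 (R : realType) (V : topologicalLmodType R) :
  (forall (C : set V) (f : V -> R) (alpha : R),
      convex_set_in C -> is_cone C ->
      (forall x, C x -> 0 <= f x) ->
      0 < alpha -> pos_homogeneous C f alpha ->
      strictly_subconvex C f ->
      {within ri C, continuous f}) /\
  (forall (f : V -> R) (alpha : R),
      (forall x, 0 <= f x) ->
      0 < alpha -> pos_homogeneous setT f alpha ->
      strictly_subconvex setT f ->
      continuous f).
Proof.
split.
  move=> C f a _ cone fge0 a0 hom sc.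
  apply/subspace_continuousP => x rix.
  apply/cvgrPdist_lt => e e0.
  have [U [oU [Ux HU]]] := core _ _ _ cone fge0 a0 hom sc _ _ rix e0.
  rewrite /within /=.
  apply: (filterS _ (open_nbhs_nbhs (conj oU Ux))) => y Uy riy.
  exact: HU y Uy riy.1.
move=> f a fge0 a0 hom sc x.
apply/cvgrPdist_lt => e e0.
have cone : is_cone (@setT V) by [].
have rix : ri setT x.
  split => //; exists setT; split => //; exact: openT.
have [U [oU [Ux HU]]] := core _ _ _ cone (fun x _ => fge0 x) a0 hom sc _ _ rix e0.
apply: (filterS _ (open_nbhs_nbhs (conj oU Ux))) => y Uy.
exact: HU y Uy I.
Qed.
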